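(* Let $\bm{G}_t\in\mathbb{R}^{n_1\times n_2}$, $\epsilon_t>0$, $\bm{L}_t=\epsilon_t\bm{I}_{n_1}+\mathrm{diag}(\bm{G}_t\bm{G}_t^T)$, $\bm{R}_t=\epsilon_t\bm{I}_{n_2}+\mathrm{diag}(\bm{G}_t^T\bm{G}_t)$, and let $\bm{X}_t,\bm{X}\in\mathbb{R}^{n_1\times n_2}$ be rank-$r$ matrices, $\bm{X}_t=\bm{U}_t\bm{\Sigma}_t\bm{V}_t^T$ a compact SVD. Let $\widetilde{\mathcal{P}}_{\mathbb{T}_t}$ be the orthogonal projector, with respect to $\langle\cdot,\cdot\rangle_{\mathcal{W}_t}$, onto $\mathbb{T}_t=\{\bm{U}_t\bm{Q}^T+\bm{P}\bm{V}_t^T:\bm{P}\in\mathbb{R}^{n_1\times r},\bm{Q}\in\mathbb{R}^{n_2\times r}\}$. Then $$\big\|(\mathcal{I}-\widetilde{\mathcal{P}}_{\mathbb{T}_t})\bm{X}\big\|_{\mathcal{W}_t}\le\frac{\mu_t^{5/4}}{\nu_t^{7/4}\,\sigma_{\min}(\bm{X})}\,\|\bm{X}-\bm{X}_t\|_{\mathcal{W}_t}^2,$$ where $\nu_t=\epsilon_t^{1/2}$ and $\mu_t=(\epsilon_t+\|\bm{G}_t\|_\vee^2)^{1/2}$.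
   Context: $\mathrm{diag}(\bm{M})$ keeps only the diagonal of $\bm{M}$. $\langle\bm{Z},\bm{Y}\rangle_{\mathcal{W}_t}=\langle\bm{L}_t^{1/4}\bm{Z}\bm{R}_t^{1/4},\bm{Y}\rangle$ with $\langle\bm{A},\bm{B}\rangle=\mathrm{trace}(\bm{A}^T\bm{B})$, and $\|\cdot\|_{\mathcal{W}_t}$ is the induced norm. $\mathcal{I}$ is the identity. $\|\bm{Z}\|_\vee=\max\{\max_i\|\bm{Z}(i,:)\|_2,\max_j\|\bm{Z}(:,j)\|_2\}$. $\sigma_{\min}(\bm{X})$ is the smallest nonzero singular value of $\bm{X}$. *)

(* Defs.v *)
From HB Require Import structures.
From mathcomp Require Import all_boot all_order all_algebra.
Set Implicit Arguments. Unset Strict Implicit. Unset Printing Implicit Defensive.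
Import Order.TTheory GRing.Theory Num.Theory.
Local Open Scope ring_scope.

Section Defs.
Variable R : rcfType.

Definition root4 (x : R) : R := Num.sqrt (Num.sqrt x).

Definition diag_part n (M : 'M[R]_n) : 'M[R]_n :=
  \matrix_(i, j) ((i == j)%:R * M i j).

Definition Lmat n1 n2 (eps : R) (G : 'M[R]_(n1, n2)) : 'M[R]_n1 :=
  eps%:M + diag_part (G *m G^T).
Definition Rmat n1 n2 (eps : R) (G : 'M[R]_(n1, n2)) : 'M[R]_n2 :=
  eps%:M + diag_part (G^T *m G).

(* M^{1/4} for a diagonal matrix M with nonnegative diagonal *)
Definition diag_root4 n (M : 'M[R]_n) : 'M[R]_n :=
  \matrix_(i, j) ((i == j)%:R * root4 (M i j)).

(* <Z, Y>_{W_t} = <L^{1/4} Z R^{1/4}, Y> with <A,B> = trace(A^T B) *)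
Definition winner n1 n2 (eps : R) (G : 'M[R]_(n1, n2)) (Z Y : 'M[R]_(n1, n2)) : R :=
  \tr ((diag_root4 (Lmat eps G) *m Z *m diag_root4 (Rmat eps G))^T *m Y).

Definition wnorm n1 n2 (eps : R) (G : 'M[R]_(n1, n2)) (Z : 'M[R]_(n1, n2)) : R :=
  Num.sqrt (winner eps G Z Z).

Definition vee_norm n1 n2 (Z : 'M[R]_(n1, n2)) : R :=
  Num.max (\big[Num.max/0]_(i < n1) Num.sqrt (\sum_(j < n2) Z i j ^+ 2))
          (\big[Num.max/0]_(j < n2) Num.sqrt (\sum_(i < n1) Z i j ^+ 2)).

Definition in_tangent n1 n2 r (U : 'M[R]_(n1, r)) (V : 'M[R]_(n2, r))
  (Z : 'M[R]_(n1, n2)) : Prop :=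
  exists (P : 'M[R]_(n1, r)) (Q : 'M[R]_(n2, r)), Z = U *m Q^T + P *m V^T.

Definition is_wproj n1 n2 r (eps : R) (G : 'M[R]_(n1, n2))
  (U : 'M[R]_(n1, r)) (V : 'M[R]_(n2, r)) (Pr : 'M[R]_(n1, n2) -> 'M[R]_(n1, n2)) : Prop :=
  forall Z, in_tangent U V (Pr Z) /\
    (forall W, in_tangent U V W -> winner eps G (Z - Pr Z) W = 0).

Definition is_compact_svd n1 n2 r (X : 'M[R]_(n1, n2)) (U : 'M[R]_(n1, r))
  (S : 'M[R]_r) (V : 'M[R]_(n2, r)) : Prop :=
  [/\ X = U *m S *m V^T, U^T *m U = 1%:M, V^T *m V = 1%:M,
      is_diag_mx S & forall i, 0 < S i i].

Definition is_singular_value n1 n2 (X : 'M[R]_(n1, n2)) (s : R) : Prop :=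
  0 <= s /\ exists (u : 'cV[R]_n1) (v : 'cV[R]_n2),
    [/\ u^T *m u = 1%:M, v^T *m v = 1%:M, X *m v = s *: u & X^T *m u = s *: v].

Definition is_sigma_min n1 n2 (X : 'M[R]_(n1, n2)) (s : R) : Prop :=
  [/\ 0 < s, is_singular_value X s &
      forall s', 0 < s' -> is_singular_value X s' -> s <= s'].

End Defs.

(* Main.v *)
Require Import Defs.
From mathcomp Require Import all_boot all_order all_algebra.
Import Order.TTheory GRing.Theory Num.Theory.
Local Open Scope ring_scope.
From HB Require Import structures.
From mathcomp Require Import complex spectral sesquilinear.
From mathcomp Require Import ring lra.

Module CPart.
Import Order.TTheory GRing.Theory Num.Theory Num.Def.
Set Implicit Arguments. Unset Strict Implicit. Unset Printing Implicit Defensive.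
Local Open Scope ring_scope.

Section Spec.
Variable R : rcfType.
Local Notation C := (R[i]).
Local Notation f := (real_complex R).
Local Notation cRe := (@complex.Re R).
Local Notation cIm := (@complex.Im R).

Definition nsq n (v : 'cV[R]_n) := \sum_i v i 0 ^+ 2.

Lemma ReD (x y : C) : cRe (x + y) = cRe x + cRe y.
Proof. by case: x => a b; case: y => c d. Qed.
Lemma ImD (x y : C) : cIm (x + y) = cIm x + cIm y.
Proof. by case: x => a b; case: y => c d. Qed.
Lemma Re_sum I (r : seq I) (P : pred I) (F : I -> C) :
  cRe (\sum_(i <- r | P i) F i) = \sum_(i <- r | P i) cRe (F i).
Proof. exact: (big_morph _ ReD). Qed.
Lemma Im_sum I (r : seq I) (P : pred I) (F : I -> C) :
  cIm (\sum_(i <- r | P i) F i) = \sum_(i <- r | P i) cIm (F i).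
Proof. exact: (big_morph _ ImD). Qed.
Lemma ReRM (x : R) (z : C) : cRe (f x * z) = x * cRe z.
Proof. by case: z => a b /=; rewrite mul0r subr0. Qed.
Lemma ImRM (x : R) (z : C) : cIm (f x * z) = x * cIm z.
Proof. by case: z => a b /=; rewrite mul0r addr0. Qed.

Lemma Re_mulmx m n p (M : 'M[R]_(m, n)) (v : 'M[C]_(n, p)) :
  map_mx cRe (map_mx f M *m v) = M *m map_mx cRe v.
Proof.
apply/matrixP => i j; rewrite !mxE Re_sum; apply: eq_bigr => k _.
by rewrite !mxE ReRM.
Qed.
Lemma Im_mulmx m n p (M : 'M[R]_(m, n)) (v : 'M[C]_(n, p)) :
  map_mx cIm (map_mx f M *m v) = M *m map_mx cIm v.
Proof.
apply/matrixP => i j; rewrite !mxE Im_sum; apply: eq_bigr => k _.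
by rewrite !mxE ImRM.
Qed.
Lemma Re_map m n (M : 'M[R]_(m, n)) : map_mx cRe (map_mx f M) = M.
Proof. by apply/matrixP => i j; rewrite !mxE. Qed.

Lemma conj_f (x : R) : conjC (f x) = f x.
Proof. exact: conjc_real. Qed.


Lemma sqnorm_mx n (u : 'cV[C]_n) :
  ((map_mx conjC u^T) *m u) 0 0 = \sum_i `|u i 0| ^+ 2.
Proof. by rewrite mxE; apply: eq_bigr => i _; rewrite !mxE normCK mulrC. Qed.

Lemma conjT_mul m n p (M : 'M[C]_(m, n)) (N : 'M[C]_(n, p)) :
  map_mx conjC (M *m N)^T = map_mx conjC N^T *m map_mx conjC M^T.
Proof. by rewrite trmx_mul map_mxM. Qed.

Lemma f_real (x : R) : f x \is Num.real.
Proof. by apply/CrealP; rewrite conj_f. Qed.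

Lemma keyK n1 n2 (X : 'M[R]_(n1, n2)) (s : R) (Hs : 0 <= s)
  (H : forall (dr : R) (a : 'cV[R]_n2), a != 0 -> X^T *m X *m a = dr *: a ->
         dr != 0 -> s ^+ 2 <= dr)
  (w : 'cV[R]_n2) :
  exists m : 'cV[R]_n2, X *m m = X *m w /\ s ^+ 2 * nsq m <= nsq (X *m w).
Proof.
pose Xc := map_mx f X.
pose A := map_mx f (X^T *m X).
have AE : A = Xc^T *m Xc by rewrite /A map_mxM map_trmx.
have Aherm : A \is hermsymmx.
  rewrite qualifE /= expr0 scale1r; apply/eqP/matrixP => i j.
  rewrite !mxE conj_f; congr (f _).
  by apply: eq_bigr => k _; rewrite !mxE mulrC.
pose P := spectralmx A; pose d := spectral_diag A.
have Pu : P \is unitarymx := spectral_unitarymx A.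
have /orthomx_spectralP HA := hermitian_normalmx Aherm.
rewrite -/P -/d invmx_unitary // in HA.
pose Pc := map_mx conjC P^T.
have PPc : P *m Pc = 1%:M := unitarymxP Pu.
have PcP : Pc *m P = 1%:M.
  by have := mulVmx (unitarymx_unit Pu); rewrite invmx_unitary.
have dreal : d \is a realmx := hermitian_spectral_diag_real Aherm.
have APc : A *m Pc = Pc *m diag_mx d.
  by rewrite HA -!mulmxA PPc mulmx1.
have PA : P *m A = diag_mx d *m P by rewrite HA !mulmxA PPc mul1mx.
pose Z := Xc *m Pc.
pose Zs := map_mx conjC Z^T.
have XcT : map_mx conjC Xc^T = Xc^T.
  by apply/matrixP => i j; rewrite !mxE conj_f.
have PcT : map_mx conjC Pc^T = P.
  by apply/matrixP => i j; rewrite !mxE conjCK.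
have ZsE : Zs = P *m Xc^T by rewrite /Zs /Z conjT_mul XcT PcT.
have ZZ : Zs *m Z = diag_mx d.
  by rewrite ZsE /Z mulmxA -(mulmxA P) -AE PA -mulmxA PPc mulmx1.
have dE k : d 0 k = f (cRe (d 0 k)).
  by rewrite complexRe; apply/esym/Creal_ReP; exact: (mxOverP dreal).
have Zcol0 k : d 0 k = 0 -> forall i, Z i k = 0.
  move=> dk0 i; have /matrixP/(_ k k) := ZZ.
  rewrite mxE [RHS]mxE eqxx mulr1n dk0 => /eqP.
  rewrite psumr_eq0; last by move=> l _; rewrite !mxE mulrC -normCK exprn_ge0.
  move=> /allP /(_ i (mem_index_enum _)) /implyP /(_ isT).
  by rewrite !mxE mulrC -normCK sqrf_eq0 normr_eq0 => /eqP.
pose J := \row_k ((d 0 k != 0)%:R : C).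
have ZJ : Z *m diag_mx J = Z.
  apply/matrixP => i k; rewrite mul_mx_diag !mxE.
  have [dk0|] := eqVneq (d 0 k) 0; last by rewrite mulr1.
  by have := Zcol0 k dk0 i; rewrite mxE => ->; rewrite mul0r.
pose wc := map_mx f w.
pose y := P *m wc.
pose mc := Pc *m (diag_mx J *m y).
pose m := map_mx cRe mc.
have XmcE : Xc *m mc = Xc *m wc.
  rewrite /mc mulmxA -/Z mulmxA ZJ /y /Z -mulmxA (mulmxA Pc) PcP mul1mx.
  done.
exists m; split.
  by rewrite /m -Re_mulmx XmcE /wc -map_mxM Re_map.
have Sa : \sum_i f (m i 0) ^+ 2 <= \sum_i `|mc i 0| ^+ 2.
  apply: ler_sum => i _; rewrite mxE complexRe normC2_Re_Im lerDl.
  by rewrite -realEsqr Creal_Im.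
have Sb : \sum_i `|mc i 0| ^+ 2 = \sum_k (d 0 k != 0)%:R * `|y k 0| ^+ 2.
  rewrite -sqnorm_mx /mc conjT_mul PcT mulmxA -(mulmxA _ P) PPc mulmx1.
  rewrite sqnorm_mx; apply: eq_bigr => k _.
  rewrite mul_diag_mx !mxE normrM exprMn; congr (_ * _).
  by case: (d 0 k != 0); rewrite ?normr1 ?normr0 ?expr1n ?expr0n.
have XwE : Xc *m wc = map_mx f (X *m w) by rewrite map_mxM.
have XwZ : Xc *m wc = Z *m y by rewrite /Z /y -mulmxA (mulmxA Pc) PcP mul1mx.
have Sc : \sum_i f ((X *m w) i 0) ^+ 2 = \sum_k d 0 k * `|y k 0| ^+ 2.
  transitivity (\sum_i `|(Xc *m wc) i 0| ^+ 2).
    apply: eq_bigr => i _; rewrite XwE real_normK; first by rewrite !mxE.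
    by rewrite !mxE; apply: f_real.
  rewrite -sqnorm_mx XwZ conjT_mul -/Zs mulmxA -(mulmxA _ Zs) ZZ.
  rewrite mxE; apply: eq_bigr => k _.
  rewrite mul_mx_diag !mxE normCK; ring.
rewrite -(lecR (s ^+ 2 * nsq m)) rmorphM rmorphXn /nsq !rmorph_sum.
under eq_bigr do rewrite rmorphXn.
under [X in _ <= X]eq_bigr do rewrite rmorphXn.
rewrite Sc.
apply: (@le_trans _ _ (f s ^+ 2 * \sum_k (d 0 k != 0)%:R * `|y k 0| ^+ 2)).
  apply: ler_wpM2l; first by rewrite exprn_ge0 // ler0c.
  by rewrite -Sb.
rewrite mulr_sumr; apply: ler_sum => k _.
have [dk0|dk0] := eqVneq (d 0 k) 0; first by rewrite dk0 /= !mul0r mulr0.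
rewrite mul1r ler_wpM2r ?exprn_ge0 //.
set dr := complex.Re (d 0 k).
have dk : d 0 k = f dr := dE k.
rewrite dk -rmorphXn lecR.
have drn0 : dr != 0.
  by apply: contraNneq dk0 => dr0; rewrite dk dr0 rmorph0.
pose q := col k Pc.
have Aq : A *m q = f dr *: q.
  apply/matrixP => i j; rewrite [LHS]mxE.
  rewrite (_ : \sum_l A i l * q l j = (A *m Pc) i k); last first.
    by rewrite mxE; apply: eq_bigr => l _; rewrite /q !mxE.
  by rewrite APc mul_mx_diag !mxE -dk mulrC.
pose a := map_mx cRe q; pose b := map_mx cIm q.
have Ha : X^T *m X *m a = dr *: a.
  have := congr1 (map_mx cRe) Aq; rewrite /A Re_mulmx => ->.
  by apply/matrixP => i j; rewrite !mxE ReRM.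
have Hb : X^T *m X *m b = dr *: b.
  have := congr1 (map_mx cIm) Aq; rewrite /A Im_mulmx => ->.
  by apply/matrixP => i j; rewrite !mxE ImRM.
have [a0|an0] := eqVneq a 0; last exact: H Ha drn0.
have [b0|bn0] := eqVneq b 0; last exact: H Hb drn0.
exfalso.
have /matrixP/(_ k k) := PPc; rewrite !mxE eqxx mulr1n big1.
  by move/eqP; rewrite eq_sym oner_eq0.
move=> i _.
have /matrixP/(_ i 0) := a0; have /matrixP/(_ i 0) := b0.
rewrite !mxE.
by case: (conjC (P k i)) => re im /= -> ->; rewrite mulr0.
Qed.
End Spec.
End CPart.
Import CPart.

Module RP.
Set Implicit Arguments. Unset Strict Implicit. Unset Printing Implicit Defensive.

Section RPart.
Variable R : rcfType.

Lemma mx11E (M : 'M[R]_1) : M = (M 0 0)%:M.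
Proof. exact: mx11_scalar. Qed.

Lemma tr_sq n (v : 'cV[R]_n) : (v^T *m v) 0 0 = nsq v.
Proof. by rewrite mxE; apply: eq_bigr => i _; rewrite mxE expr2. Qed.

Lemma nsq_ge0 n (v : 'cV[R]_n) : 0 <= nsq v.
Proof. by apply: sumr_ge0 => i _; rewrite sqr_ge0. Qed.

Lemma nsq_gt0 n (v : 'cV[R]_n) : v != 0 -> 0 < nsq v.
Proof.
move=> vn0; rewrite lt_def nsq_ge0 andbT; apply: contra vn0 => /eqP.
move=> /psumr_eq0P H; apply/eqP/matrixP => i j; rewrite ord1 mxE.
by apply/eqP; rewrite -sqrf_eq0; apply/eqP/H => // k _; rewrite sqr_ge0.
Qed.

Lemma nsqZ n (k : R) (v : 'cV[R]_n) : nsq (k *: v) = k ^+ 2 * nsq v.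
Proof. by rewrite /nsq mulr_sumr; apply: eq_bigr => i _; rewrite mxE exprMn. Qed.

Lemma eigH n1 n2 (X : 'M[R]_(n1, n2)) smin : is_sigma_min X smin ->
  forall (dr : R) (a : 'cV[R]_n2), a != 0 -> X^T *m X *m a = dr *: a ->
  dr != 0 -> smin ^+ 2 <= dr.
Proof.
case=> smin_gt0 _ Hmin dr a an0 Ha drn0.
have na_gt0 := nsq_gt0 an0.
set na := nsq a in na_gt0.
have XaE : nsq (X *m a) = dr * na.
  rewrite -tr_sq trmx_mul -mulmxA (mulmxA X^T) Ha -scalemxAr mxE tr_sq.
  by [].
have dr_gt0 : 0 < dr.
  have := nsq_ge0 (X *m a); rewrite XaE pmulr_lge0 // le_eqVlt.
  by rewrite eq_sym (negbTE drn0).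
pose sg := Num.sqrt dr.
have sg_gt0 : 0 < sg by rewrite sqrtr_gt0.
have sg2 : sg ^+ 2 = dr by rewrite sqr_sqrtr // ltW.
pose c := (Num.sqrt na)^-1.
have c2 : c ^+ 2 * na = 1.
  by rewrite exprVn sqr_sqrtr ?ltW // mulVf // gt_eqF.
pose v := c *: a.
pose u := sg^-1 *: (X *m v).
have Hsv : is_singular_value X sg.
  split; first exact: ltW.
  exists u, v; split.
  - rewrite [LHS]mx11E tr_sq /u nsqZ -scalemxAr nsqZ XaE; congr (_%:M).
    rewrite exprVn sg2 (_ : c ^+ 2 * (dr * na) = dr * (c ^+ 2 * na)); last by ring.
    by rewrite c2 mulr1 mulVf // gt_eqF.
  - by rewrite [LHS]mx11E tr_sq /v nsqZ c2.
  - by rewrite /u scalerA mulfV ?gt_eqF // scale1r.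
  - rewrite /u /v -!scalemxAr mulmxA Ha !scalerA; congr (_ *: _).
    by rewrite -sg2 expr2 mulrAC mulrA mulVf ?gt_eqF // mul1r.
have := Hmin sg sg_gt0 Hsv => le_s.
by rewrite -sg2 lerXn2r // ?nnegrE ltW.
Qed.


Definition frob m n (M : 'M[R]_(m, n)) := \sum_i \sum_j M i j ^+ 2.

Lemma frob_ge0 m n (M : 'M[R]_(m, n)) : 0 <= frob M.
Proof. by apply: sumr_ge0 => i _; apply: sumr_ge0 => j _; rewrite sqr_ge0. Qed.

Lemma frobT m n (M : 'M[R]_(m, n)) : frob M^T = frob M.
Proof.
rewrite /frob exchange_big; apply: eq_bigr => i _; apply: eq_bigr => j _.
by rewrite mxE.
Qed.

Lemma frob_tr m n (M : 'M[R]_(m, n)) : frob M = \tr (M^T *m M).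
Proof.
rewrite /frob /mxtrace exchange_big; apply: eq_bigr => j _; rewrite mxE.
by apply: eq_bigr => i _; rewrite mxE expr2.
Qed.

Lemma frob_proj n k p (U : 'M[R]_(n, k)) (M : 'M[R]_(n, p)) :
  U^T *m U = 1%:M -> frob ((1%:M - U *m U^T) *m M) <= frob M.
Proof.
move=> UU.
have PT : (1%:M - U *m U^T)^T = 1%:M - U *m U^T.
  by rewrite linearB /= trmx1 trmx_mul trmxK.
have PP : (1%:M - U *m U^T) *m (1%:M - U *m U^T) = 1%:M - U *m U^T.
  rewrite mulmxBl mul1mx mulmxBr mulmx1 mulmxA -(mulmxA U) UU mulmx1.
  by rewrite subrr subr0.
rewrite !frob_tr trmx_mul PT mulmxA -(mulmxA M^T) PP mulmxBr mulmx1.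
rewrite mulmxBl raddfB /= gerBl //.
rewrite -!mulmxA mulmxA -[M^T *m U]trmxK trmx_mul trmxK -frob_tr.
exact: frob_ge0.
Qed.

Lemma CS n (x y : 'I_n -> R) :
  (\sum_l x l * y l) ^+ 2 <= (\sum_l x l ^+ 2) * (\sum_l y l ^+ 2).
Proof.
set S := \sum_l x l * y l; set SA := \sum_l x l ^+ 2; set SB := \sum_l y l ^+ 2.
have SB0 : 0 <= SB by apply: sumr_ge0 => l _; rewrite sqr_ge0.
have SA0 : 0 <= SA by apply: sumr_ge0 => l _; rewrite sqr_ge0.
have H0 : 0 <= \sum_l (x l * SB - y l * S) ^+ 2.
  by apply: sumr_ge0 => l _; rewrite sqr_ge0.
have E : \sum_l (x l * SB - y l * S) ^+ 2 = SB * (SA * SB - S ^+ 2).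
  transitivity (\sum_l (SB ^+ 2 * x l ^+ 2 - (2 * SB * S) * (x l * y l)
                        + S ^+ 2 * y l ^+ 2)).
    by apply: eq_bigr => l _; ring.
  rewrite big_split /= sumrB -!mulr_sumr -/S -/SA -/SB; ring.
rewrite E in H0.
have [SBz|SBp] := eqVneq SB 0.
  have y0 : forall l, y l = 0.
    move=> l; apply/eqP; rewrite -sqrf_eq0; apply/eqP.
    by move/eqP: SBz; rewrite psumr_eq0 => [/allP/(_ l (mem_index_enum _))/implyP/(_ isT)/eqP|l' _]; rewrite ?sqr_ge0.
  have -> : S = 0 by rewrite /S big1 // => l _; rewrite y0 mulr0.
  by rewrite expr0n /= mulr_ge0.
have SBgt : 0 < SB by rewrite lt_def SBp SB0.
rewrite pmulr_rge0 // subr_ge0 in H0.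
exact: H0.
Qed.

Lemma nsq_mul m n (B : 'M[R]_(m, n)) (v : 'cV[R]_n) :
  nsq (B *m v) <= frob B * nsq v.
Proof.
rewrite /nsq /frob mulr_suml; apply: ler_sum => i _; rewrite mxE.
exact: (CS (fun l => B i l) (fun l => v l 0)).
Qed.


Section Weights.
Variables (n1 n2 : nat) (eps : R) (G : 'M[R]_(n1, n2)).

Definition aw i := root4 (Lmat eps G i i).
Definition bw j := root4 (Rmat eps G j j).
Definition ws (Z Y : 'M[R]_(n1, n2)) :=
  \sum_i \sum_j aw i * bw j * (Z i j * Y i j).

Lemma diag_root4E n (M : 'M[R]_n) : diag_root4 M = diag_mx (\row_i root4 (M i i)).
Proof.
apply/matrixP => i j; rewrite !mxE.
by have [->|] := eqVneq i j; rewrite ?mul1r ?mul0r ?mulr1n ?mulr0n.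
Qed.

Lemma winnerE Z Y : winner eps G Z Y = ws Z Y.
Proof.
rewrite /winner /ws !diag_root4E /mxtrace exchange_big.
apply: eq_bigr => j _; rewrite mxE; apply: eq_bigr => i _.
rewrite /aw /bw mul_mx_diag mul_diag_mx !mxE; ring.
Qed.

Lemma LmatE i : Lmat eps G i i = eps + \sum_j G i j ^+ 2.
Proof.
rewrite /Lmat !mxE eqxx mulr1n mul1r; congr (_ + _).
by apply: eq_bigr => j _; rewrite mxE expr2.
Qed.

Lemma RmatE j : Rmat eps G j j = eps + \sum_i G i j ^+ 2.
Proof.
rewrite /Rmat !mxE eqxx mulr1n mul1r; congr (_ + _).
by apply: eq_bigr => i _; rewrite mxE expr2.
Qed.

Lemma vee_ge0 : 0 <= vee_norm G.
Proof.
rewrite /vee_norm le_max; apply/orP; left.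
by elim/big_ind: _ => // [x y hx hy|i _]; [rewrite le_max hx | exact: sqrtr_ge0].
Qed.

Lemma sq_le_vee (x : R) : 0 <= x -> Num.sqrt x <= vee_norm G -> x <= vee_norm G ^+ 2.
Proof.
move=> x0 h; rewrite -[x]sqr_sqrtr //.
by rewrite lerXn2r // nnegrE ?sqrtr_ge0 ?vee_ge0.
Qed.

Lemma row_le_vee i : \sum_j G i j ^+ 2 <= vee_norm G ^+ 2.
Proof.
apply: sq_le_vee; first by apply: sumr_ge0 => j _; rewrite sqr_ge0.
rewrite /vee_norm le_max; apply/orP; left.
exact: (le_bigmax _ (fun i => Num.sqrt (\sum_j G i j ^+ 2)) i).
Qed.

Lemma col_le_vee j : \sum_i G i j ^+ 2 <= vee_norm G ^+ 2.
Proof.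
apply: sq_le_vee; first by apply: sumr_ge0 => i _; rewrite sqr_ge0.
rewrite /vee_norm le_max; apply/orP; right.
exact: (le_bigmax _ (fun j => Num.sqrt (\sum_i G i j ^+ 2)) j).
Qed.

Lemma root4_le (x y : R) : x <= y -> root4 x <= root4 y.
Proof. by move=> h; rewrite /root4; do 2 apply: ler_wsqrtr. Qed.

Hypothesis eps_gt0 : 0 < eps.

Let nu := Num.sqrt eps.
Let mu := Num.sqrt (eps + vee_norm G ^+ 2).

Lemma aw_bounds i : Num.sqrt nu <= aw i <= Num.sqrt mu.
Proof.
rewrite /aw LmatE; apply/andP; split; apply: root4_le.
  by rewrite lerDl; apply: sumr_ge0 => j _; rewrite sqr_ge0.
by rewrite lerD2l row_le_vee.
Qed.

Lemma bw_bounds j : Num.sqrt nu <= bw j <= Num.sqrt mu.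
Proof.
rewrite /bw RmatE; apply/andP; split; apply: root4_le.
  by rewrite lerDl; apply: sumr_ge0 => i _; rewrite sqr_ge0.
by rewrite lerD2l col_le_vee.
Qed.

Lemma w_bounds i j : nu <= aw i * bw j <= mu.
Proof.
have /andP[a1 a2] := aw_bounds i; have /andP[b1 b2] := bw_bounds j.
have s0 : 0 <= Num.sqrt nu by rewrite sqrtr_ge0.
apply/andP; split.
  rewrite -[nu]sqr_sqrtr ?sqrtr_ge0 // expr2.
  by apply: ler_pM.
rewrite -[mu]sqr_sqrtr ?sqrtr_ge0 // expr2.
by apply: ler_pM => //; [exact: le_trans s0 a1 | exact: le_trans s0 b1].
Qed.

Lemma ws_ge0 W : 0 <= ws W W.
Proof.
apply: sumr_ge0 => i _; apply: sumr_ge0 => j _.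
have /andP[h _] := w_bounds i j.
by rewrite mulr_ge0 // ?(le_trans _ h) ?sqrtr_ge0 // -expr2 sqr_ge0.
Qed.

Lemma ws_expand D W : ws (D + W) (D + W) = ws D D + 2 * ws D W + ws W W.
Proof.
rewrite /ws mulr_sumr -!big_split /=; apply: eq_bigr => i _.
rewrite mulr_sumr -!big_split /=; apply: eq_bigr => j _.
rewrite !mxE; ring.
Qed.

Lemma ws_le_frob Y : ws Y Y <= mu * frob Y.
Proof.
rewrite /ws /frob mulr_sumr; apply: ler_sum => i _.
rewrite mulr_sumr; apply: ler_sum => j _.
have /andP[_ h] := w_bounds i j.
by rewrite -expr2 ler_wpM2r // sqr_ge0.
Qed.

Lemma frob_le_ws E : nu * frob E <= ws E E.
Proof.
rewrite /ws /frob mulr_sumr; apply: ler_sum => i _.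
rewrite mulr_sumr; apply: ler_sum => j _.
have /andP[h _] := w_bounds i j.
by rewrite -expr2 ler_wpM2r // sqr_ge0.
Qed.

End Weights.

End RPart.

Lemma final_arith (R : rcfType) (nu mu s Dq Fy Fe Eq : R) :
  0 < nu -> nu <= mu -> 0 < s -> 0 <= Dq -> 0 <= Fy -> 0 <= Fe ->
  Dq <= mu * Fy -> s ^+ 2 * Fy <= Fe ^+ 2 -> nu * Fe <= Eq ->
  Num.sqrt Dq <= (mu * root4 mu) / (nu * Num.sqrt nu * root4 nu * s)
                 * Num.sqrt Eq ^+ 2.
Proof.
move=> nu0 numu s0 D0 Fy0 Fe0 h1 h2 h3.
have Eq0 : 0 <= Eq by apply: le_trans h3; rewrite mulr_ge0 // ltW.
rewrite sqr_sqrtr //.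
have mu0 : 0 < mu by apply: lt_le_trans numu.
set t := root4 mu; set q := root4 nu.
have q0 : 0 < q by rewrite /q /root4 !sqrtr_gt0.
have qt : q <= t by rewrite /q /t /root4; do 2 apply: ler_wsqrtr.
have muE : mu = t ^+ 4.
  by rewrite /t /root4 (_ : 4 = 2 * 2)%N // exprM !sqr_sqrtr ?sqrtr_ge0 // ltW.
have nuE : nu = q ^+ 4.
  by rewrite /q /root4 (_ : 4 = 2 * 2)%N // exprM !sqr_sqrtr ?sqrtr_ge0 // ltW.
have snuE : Num.sqrt nu = q ^+ 2.
  by rewrite /q /root4 sqr_sqrtr // sqrtr_ge0.
rewrite snuE muE nuE.
have K0 : 0 <= t ^+ 4 * t / (q ^+ 4 * q ^+ 2 * q * s) * Eq.
  by rewrite mulr_ge0 // divr_ge0 // ?mulr_ge0 // ?exprn_ge0 // ltW // (lt_le_trans q0 qt).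
rewrite -(ger0_norm K0) -sqrtr_sqr; apply: ler_wsqrtr.
rewrite muE in h1; rewrite nuE in h3.
have t0 : 0 < t by apply: lt_le_trans qt.
have B0 : 0 < (q ^+ 4 * q ^+ 2 * q * s) ^+ 2.
  by rewrite exprn_gt0 // !mulr_gt0 // exprn_gt0.
rewrite exprMn expr_div_n mulrAC ler_pdivlMr //.
apply: (le_trans (ler_wpM2r (ltW B0) h1)).
have -> : t ^+ 4 * Fy * (q ^+ 4 * q ^+ 2 * q * s) ^+ 2
          = t ^+ 4 * q ^+ 14 * (s ^+ 2 * Fy) by ring.
have tq0 : 0 <= t ^+ 4 * q ^+ 14 by rewrite mulr_ge0 // exprn_ge0 // ltW.
apply: (le_trans (ler_wpM2l tq0 h2)).
have -> : t ^+ 4 * q ^+ 14 * Fe ^+ 2 = t ^+ 4 * q ^+ 6 * (q ^+ 4 * Fe) ^+ 2 by ring.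
have qF0 : 0 <= q ^+ 4 * Fe by rewrite mulr_ge0 // exprn_ge0 // ltW.
have h3' : (q ^+ 4 * Fe) ^+ 2 <= Eq ^+ 2 by rewrite !expr2 ler_pM.
have tq6 : 0 <= t ^+ 4 * q ^+ 6 by rewrite mulr_ge0 // exprn_ge0 // ltW.
apply: (le_trans (ler_wpM2l tq6 h3')).
apply: ler_wpM2r; first by rewrite exprn_ge0.
have -> : (t ^+ 4 * t) ^+ 2 = t ^+ 4 * t ^+ 6 by ring.
apply: ler_wpM2l; first by rewrite exprn_ge0 // ltW.
by rewrite lerXn2r // nnegrE ltW.
Qed.

Lemma tangentB (R : rcfType) n1 n2 r (U : 'M[R]_(n1, r)) (V : 'M[R]_(n2, r)) A B :
  in_tangent U V A -> in_tangent U V B -> in_tangent U V (A - B).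
Proof.
move=> [P1 [Q1 ->]] [P2 [Q2 ->]]; exists (P1 - P2), (Q1 - Q2).
by rewrite linearB /= mulmxBr mulmxBl addrACA opprD.
Qed.

Lemma col_mulmx (R : rcfType) m n p (A : 'M[R]_(m, n)) (B : 'M[R]_(n, p)) j :
  col j (A *m B) = A *m col j B.
Proof. by rewrite !colE mulmxA. Qed.

Lemma frob_col (R : rcfType) m n (M : 'M[R]_(m, n)) : frob M = \sum_j nsq (col j M).
Proof.
rewrite /frob /nsq exchange_big; apply: eq_bigr => j _; apply: eq_bigr => i _.
by rewrite mxE.
Qed.

End RP.
Import RP.

Theorem lemma3p7 (R : rcfType) (n1 n2 r : nat) (G : 'M[R]_(n1, n2)) (eps : R)
  (Xt X : 'M[R]_(n1, n2)) (Ut : 'M[R]_(n1, r)) (St : 'M[R]_r) (Vt : 'M[R]_(n2, r))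
  (Pr : 'M[R]_(n1, n2) -> 'M[R]_(n1, n2)) (smin : R) :
  0 < eps ->
  \rank Xt = r -> \rank X = r ->
  is_compact_svd Xt Ut St Vt ->
  is_wproj eps G Ut Vt Pr ->
  is_sigma_min X smin ->
  let nu := Num.sqrt eps in
  let mu := Num.sqrt (eps + vee_norm G ^+ 2) in
  wnorm eps G (X - Pr X)
    <= (mu * root4 mu) / (nu * Num.sqrt nu * root4 nu * smin)
       * wnorm eps G (X - Xt) ^+ 2.
Proof.
move=> eps0 _ _ [XtE UU VV _ _] Hproj Hsig.
cbv zeta.
set nu := Num.sqrt eps; set mu := Num.sqrt (eps + vee_norm G ^+ 2).
have [smin0 _ _] := Hsig.
set E := X - Xt.
set Pm := 1%:M - Ut *m Ut^T.
set Qm := 1%:M - Vt *m Vt^T.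
set Y := Pm *m X *m Qm.
have PmUt : Pm *m Ut = 0 by rewrite /Pm mulmxBl mul1mx -mulmxA UU mulmx1 subrr.
have VtQm : Vt^T *m Qm = 0 by rewrite /Qm mulmxBr mulmx1 mulmxA VV mul1mx subrr.
have PmX : Pm *m X = Pm *m E by rewrite /E mulmxBr XtE !mulmxA PmUt !mul0mx subr0.
have XQm : X *m Qm = E *m Qm by rewrite /E mulmxBl XtE -!mulmxA VtQm !mulmx0 subr0.
have [PrT PrO] := Hproj X.
have Z0T : in_tangent Ut Vt (X - Y).
  exists (Pm *m X *m Vt), (X^T *m Ut).
  rewrite /Y /Qm trmx_mul trmxK mulmxBr mulmx1 opprB addrCA -!mulmxA.
  rewrite addrC; congr (_ + _).
  by rewrite /Pm mulmxBl mul1mx opprB addrC subrK mulmxA.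
have WT := tangentB PrT Z0T.
have orth := PrO _ WT.
have step1 : ws eps G (X - Pr X) (X - Pr X) <= ws eps G Y Y.
  rewrite [in X in _ <= X](_ : Y = (X - Pr X) + (Pr X - (X - Y))); last first.
    by rewrite addrA subrK opprB addrC subrK.
  have orth' : ws eps G (X - Pr X) (Pr X - (X - Y)) = 0 by rewrite -winnerE.
  rewrite (ws_expand _ _ (X - Pr X)) orth' mulr0 addr0 lerDl; exact: ws_ge0.
have step2 : ws eps G Y Y <= mu * frob Y by apply: ws_le_frob.
have step3 : nu * frob E <= ws eps G E E by apply: frob_le_ws.
have QmT : Qm^T = Qm by rewrite /Qm linearB /= trmx1 trmx_mul trmxK.
have step4 : smin ^+ 2 * frob Y <= frob E ^+ 2.
  rewrite frob_col mulr_sumr.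
  apply: (@le_trans _ _ (\sum_j frob (Pm *m E) * nsq (col j (E *m Qm)))).
    apply: ler_sum => j _.
    have [m [Xm Hm]] := keyK (X:=X) (ltW smin0) (eigH Hsig) (col j Qm).
    have cY : col j Y = (Pm *m E) *m m.
      by rewrite /Y col_mulmx -[LHS]mulmxA -Xm mulmxA PmX.
    have cXQ : X *m col j Qm = col j (E *m Qm) by rewrite -col_mulmx XQm.
    rewrite cY.
    apply: le_trans (ler_wpM2l _ (nsq_mul _ _)) _.
      by rewrite exprn_ge0 // ltW.
    rewrite mulrCA; apply: ler_wpM2l; first exact: frob_ge0.
    by rewrite -cXQ.
  rewrite -mulr_sumr -frob_col expr2.
  apply: ler_pM; try exact: frob_ge0.
    exact: frob_proj.
  rewrite -frobT trmx_mul QmT -[frob E]frobT.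
  exact: frob_proj.
rewrite /wnorm !winnerE.
apply: final_arith (le_trans step1 step2) step4 step3.
- by rewrite sqrtr_gt0.
- by rewrite ler_wsqrtr // lerDl sqr_ge0.
- exact: smin0.
- exact: ws_ge0.
- exact: frob_ge0.
- exact: frob_ge0.
Qed.
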